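(* Consider the $\kappa$-adaptive attack model with $\kappa>1$ and success proportion $p$, and let $A(\kappa)$ be the index of the first successful trial. Then for $a\in\{1,\dots,\lceil 2^n(1-p)/\kappa\rceil+1\}$, $$\mathbb{P}\big(A(\kappa)=a\big)=\frac{p\,2^n}{2^n-\kappa(a-1)}\cdot\frac{\binom{2^n(1-p)/\kappa}{a-1}}{\binom{2^n/\kappa}{a-1}}.$$
   Context: Model: among the $2^n$ templates of $\mathbb{Z}_2^n$, a proportion $p$ are successful (hits). A $\kappa$-adaptive attacker is one who, for each trial, is able to identify $\kappa$ non-hit templates: at each trial she guesses uniformly among the templates not yet identified as non-hits, so that given that the first $a-1$ trials failed, the $a$-th trial fails with probability $\frac{2^n(1-p)-(a-1)\kappa}{2^n-(a-1)\kappa}$. For real $x$ and integer $m\ge0$, $\binom{x}{m}=x(x-1)\cdots(x-m+1)/m!$. *)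

(* Defs.v *)
From HB Require Import structures.
From mathcomp Require Import all_boot all_order all_algebra.
Set Implicit Arguments. Unset Strict Implicit. Unset Printing Implicit Defensive.
Import Order.TTheory GRing.Theory Num.Theory.
Local Open Scope ring_scope.

Definition binomr {R : fieldType} (x : R) (m : nat) : R :=
  (\prod_(i < m) (x - i%:R)) / (m`!)%:R.

(* kappa-adaptive model: given that the first a-1 trials failed, the a-th
   trial fails with probability (2^n(1-p) - (a-1)kappa)/(2^n - (a-1)kappa). *)
Definition fail_prob {R : fieldType} (n : nat) (p kappa : R) (a : nat) : R :=
  (2%:R ^+ n * (1 - p) - (a.-1)%:R * kappa) / (2%:R ^+ n - (a.-1)%:R * kappa).

(* P(A(kappa) = a), by the chain rule: trials 1..a-1 fail, trial a succeeds. *)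
Definition first_hit_prob {R : fieldType} (n : nat) (p kappa : R) (a : nat) : R :=
  (\prod_(1 <= j < a) fail_prob n p kappa j) * (1 - fail_prob n p kappa a).

(* Main.v *)
Require Import Defs.
From HB Require Import structures.
From mathcomp Require Import all_boot all_order all_algebra.
Import Order.TTheory GRing.Theory Num.Theory.
Local Open Scope ring_scope.

Lemma binom_ratio (R : archiRealFieldType) (x y k : R) (m : nat) :
  k != 0 ->
  binomr (x / k) m / binomr (y / k) m =
  \prod_(i < m) ((x - i%:R * k) / (y - i%:R * k)).
Proof.
move=> k0; rewrite /binomr.
have f0 : (m`!)%:R != 0 :> R by rewrite pnatr_eq0 -lt0n fact_gt0.
rewrite invf_div mulrA -[_ / _ * _]mulrA mulVf // mulr1 -prodf_div.
apply: eq_bigr => i _.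
have -> : x / k - i%:R = (x - i%:R * k) / k by rewrite mulrBl -mulrA mulfV ?mulr1.
have -> : y / k - i%:R = (y - i%:R * k) / k by rewrite mulrBl -mulrA mulfV ?mulr1.
by rewrite invf_div mulrA -[_ / k * k]mulrA mulVf ?mulr1.
Qed.

Theorem lemma4p8 (R : archiRealFieldType) (n kappa : nat) (p : R) (a : nat) :
  (1 < kappa)%N ->
  0 < p -> p <= 1 ->
  (exists h : nat, p * 2%:R ^+ n = h%:R) ->
  (* the model is well defined up to trial a: templates remain to be guessed *)
  ((a.-1) * kappa < 2 ^ n)%N ->
  (1 <= a)%N ->
  (a%:Z <= Num.ceil (2%:R ^+ n * (1 - p) / kappa%:R) + 1)%R ->
  first_hit_prob n p kappa%:R a =
    (p * 2%:R ^+ n) / (2%:R ^+ n - kappa%:R * (a.-1)%:R)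
    * (binomr (2%:R ^+ n * (1 - p) / kappa%:R) a.-1
       / binomr (2%:R ^+ n / kappa%:R) a.-1).
Proof.
move=> k1 _ _ _ hlt; case: a hlt => [//|m] /= hlt _ _.
have k0 : kappa%:R != 0 :> R by rewrite pnatr_eq0; by case: (kappa) k1 => [|[]].
rewrite binom_ratio //.
have d0 : 2%:R ^+ n - m%:R * kappa%:R != 0 :> R.
  rewrite subr_eq0 -natrX -natrM eqr_nat eqn_leq negb_and.
  by rewrite (ltn_geF hlt) // orbT.
rewrite /first_hit_prob big_add1 /= big_mkord.
rewrite mulrC [kappa%:R * _]mulrC; congr (_ * _).
rewrite /fail_prob /=.
apply: (mulIf d0); rewrite mulrBl mul1r divfK // mulfVK //.
rewrite mulrBr mulr1 opprB addrA subrK.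
by rewrite opprB addrC subrK mulrC.
Qed.
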